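(* Let $X$ be a real Hilbert space, $A,B\colon X\rightrightarrows X$ maximally monotone, $T:=\operatorname{Id}-J_A+J_BR_A$, $v:=P_{\overline{\operatorname{ran}}(\operatorname{Id}-T)}(0)$, $D:=\operatorname{dom}A-\operatorname{dom}B$, $R:=\operatorname{ran}A+\operatorname{ran}B$, $v_D:=P_{\overline D}(0)$, $v_R:=P_{\overline R}(0)$, and assume $\overline{\operatorname{ran}}(\operatorname{Id}-T)=\overline{D\cap R}=\overline D\cap\overline R$. Set $Z:=\{x\in X: 0\in -v+Ax+B(x-v)\}$ and $\widetilde Z:=\{x\in X: 0\in -v_R+Ax+B(x-v_D)\}$. Then (i) $\widetilde Z\subseteq Z$; (ii) if $v_R=0$, then $\widetilde Z=Z$.
   Context: $J_C:=(\operatorname{Id}+C)^{-1}$ is the resolvent and $R_C:=2J_C-\operatorname{Id}$ the reflected resolvent of a maximally monotone operator $C$. $P_S$ denotes the projection onto a nonempty closed convex set $S$; the closures $\overline D,\overline R$ are convex. $\overline{\operatorname{ran}}$ denotes closure of the range. *)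

(* Defs.v *)
From HB Require Import structures.
From mathcomp Require Import all_boot all_order all_algebra.
From mathcomp Require Import all_classical all_reals all_analysis.
Set Implicit Arguments. Unset Strict Implicit. Unset Printing Implicit Defensive.
Import Order.TTheory GRing.Theory Num.Theory.
Import numFieldNormedType.Exports.
Local Open Scope classical_set_scope.
Local Open Scope ring_scope.

Section Defs.
Variables (R : realType) (X : normedModType R).

(* ip is an inner product on X inducing the norm of X
   (so a complete X with such an ip is a real Hilbert space). *)
Definition is_inner_product (ip : X -> X -> R) : Prop :=
  [/\ (forall x y, ip x y = ip y x),
      (forall (a : R) (x y z : X), ip (a *: x + y) z = a * ip x z + ip y z) &
      (forall x, ip x x = `|x| ^+ 2)].

Definition monotone_op (ip : X -> X -> R) (A : X -> set X) : Prop :=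
  forall x y u w, A x u -> A y w -> 0 <= ip (x - y) (u - w).

Definition maximally_monotone (ip : X -> X -> R) (A : X -> set X) : Prop :=
  monotone_op ip A /\
  forall B : X -> set X, monotone_op ip B ->
    (forall x u, A x u -> B x u) -> forall x u, B x u -> A x u.

Definition dom_op (A : X -> set X) : set X := [set x | exists u, A x u].
Definition ran_op (A : X -> set X) : set X := [set u | exists x, A x u].

(* resolvent J_C = (Id + C)^{-1}, as a set-valued operator *)
Definition resolvent (C : X -> set X) : X -> set X :=
  fun x => [set y | C y (x - y)].

Definition refl_resolvent (C : X -> set X) : X -> set X :=
  fun x => [set 2%:R *: y - x | y in resolvent C x].

Definition DR_op (A B : X -> set X) : X -> set X :=
  fun x => [set t | exists a r b, [/\ resolvent A x a, refl_resolvent A x r,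
                     resolvent B r b & t = x - a + b]].

Definition id_minus (T : X -> set X) : X -> set X :=
  fun x => [set x - t | t in T x].

Definition dom_diff (A B : X -> set X) : set X :=
  [set d | exists a b, [/\ dom_op A a, dom_op B b & d = a - b]].
Definition ran_sum (A B : X -> set X) : set X :=
  [set r | exists a b, [/\ ran_op A a, ran_op B b & r = a + b]].

Definition is_proj (S : set X) (z p : X) : Prop :=
  S p /\ forall s, S s -> `|z - p| <= `|z - s|.

End Defs.

(* Main.v *)
Require Import Defs.
From HB Require Import structures.
From mathcomp Require Import all_boot all_order all_algebra.
From mathcomp Require Import all_classical all_reals all_analysis.
From mathcomp Require Import ring lra.
Import Order.TTheory GRing.Theory Num.Theory.
Import numFieldNormedType.Exports.
Local Open Scope classical_set_scope.
Local Open Scope ring_scope.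

Section Hilb.
Variables (R : realType) (X : completeNormedModType R) (ip : X -> X -> R).
Hypothesis hip : is_inner_product ip.

Lemma ipC x y : ip x y = ip y x.
Proof. by case: hip. Qed.
Lemma ip_lin a x y z : ip (a *: x + y) z = a * ip x z + ip y z.
Proof. by case: hip. Qed.
Lemma ipxx x : ip x x = `|x| ^+ 2.
Proof. by case: hip. Qed.
Lemma ip0l z : ip 0 z = 0.
Proof. have := ip_lin 1 0 0 z; rewrite scale1r addr0 mul1r; lra. Qed.
Lemma ipDl x y z : ip (x + y) z = ip x z + ip y z.
Proof. by have := ip_lin 1 x y z; rewrite scale1r mul1r. Qed.
Lemma ipZl a x z : ip (a *: x) z = a * ip x z.
Proof. by have := ip_lin a x 0 z; rewrite addr0 ip0l addr0. Qed.
Lemma ipNl x z : ip (- x) z = - ip x z.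
Proof. by rewrite -scaleN1r ipZl mulN1r. Qed.
Lemma ipBl x y z : ip (x - y) z = ip x z - ip y z.
Proof. by rewrite ipDl ipNl. Qed.
Lemma ip0r z : ip z 0 = 0.
Proof. by rewrite ipC ip0l. Qed.
Lemma ipDr x y z : ip z (x + y) = ip z x + ip z y.
Proof. by rewrite ipC ipDl !(ipC z). Qed.
Lemma ipZr a x z : ip z (a *: x) = a * ip z x.
Proof. by rewrite ipC ipZl ipC. Qed.
Lemma ipNr x z : ip z (- x) = - ip z x.
Proof. by rewrite ipC ipNl ipC. Qed.
Lemma ipBr x y z : ip z (x - y) = ip z x - ip z y.
Proof. by rewrite ipDr ipNr. Qed.
Lemma ipxx_ge0 x : 0 <= ip x x.
Proof. by rewrite ipxx sqr_ge0. Qed.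
Lemma ipxx_eq0 x : ip x x = 0 -> x = 0.
Proof. by rewrite ipxx => /eqP; rewrite sqrf_eq0 normr_eq0 => /eqP. Qed.
Lemma ipxx_le0 x : ip x x <= 0 -> x = 0.
Proof. by move=> h; apply: ipxx_eq0; apply/eqP; rewrite eq_le h ipxx_ge0. Qed.

Lemma CS x y : `|ip x y| <= `|x| * `|y|.
Proof.
set b := ip x y; set a := `|x|; set c := `|y|.
have ha : 0 <= a by apply: normr_ge0.
have hc : 0 <= c by apply: normr_ge0.
have key : 0 <= ip (c ^+ 2 *: x - b *: y) (c ^+ 2 *: x - b *: y) by apply: ipxx_ge0.
rewrite !(ipBl, ipBr, ipZl, ipZr) !ipxx -/a -/c (ipC y x) -/b in key.
have key2 : 0 <= c ^+ 2 * (c ^+ 2 * a ^+ 2 - b ^+ 2).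
  by apply: (le_trans key); rewrite le_eqVlt; apply/orP; left; apply/eqP; ring.
have [c0|cpos] := eqVneq c 0.
  have y0 : y = 0 by apply/eqP; rewrite -normr_eq0 -/c c0.
  by rewrite /b y0 ip0r normr0 mulr_ge0.
have cp : 0 < c by rewrite lt_def cpos hc.
have h2 : b ^+ 2 <= (a * c) ^+ 2.
  have : 0 <= c ^+ 2 * a ^+ 2 - b ^+ 2.
    by rewrite -(pmulr_rge0 _ (exprn_gt0 2 cp)).
  rewrite exprMn; lra.
rewrite -(ler_pXn2r (n:=2)) //; last by rewrite nnegrE mulr_ge0.
by rewrite real_normK ?num_real // mulrC.
Qed.


Lemma closure_normP (A : set X) x :
  closure A x <-> forall e : R, 0 < e -> exists y, A y /\ `|x - y| < e.
Proof.
split.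
- move=> cl e e0.
  have := cl (ball x e).
  case. by apply: nbhsx_ballx.
  move=> y [Ay]; rewrite -ball_normE /ball_ /= => h; by exists y.
- move=> H B /nbhs_ballP [e /= e0 sB].
  have [y [Ay hy]] := H e e0; exists y; split => //; apply: sB.
  by rewrite -ball_normE /ball_ /=.
Qed.

Lemma ipNN x y : ip (- x) (- y) = ip x y.
Proof. by rewrite ipNl ipNr opprK. Qed.

Lemma max_mono_in M : maximally_monotone ip M ->
  forall y w, (forall p a, M p a -> 0 <= ip (y - p) (w - a)) -> M y w.
Proof.
move=> [monoM maxM] y w H.
pose B := fun z => [set u | M z u \/ (z = y /\ u = w)].
have monoB : monotone_op ip B.
  move=> x1 x2 u1 u2 [h1|[-> ->]] [h2|[-> ->]].
  - exact: monoM h1 h2.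
  - by rewrite -ipNN !opprB; apply: H.
  - exact: H.
  - by rewrite !subrr ip0l.
by apply: (maxM B monoB) => [x u h|]; [left|right].
Qed.

Arguments max_mono_in {M}.

Definition phi y w x u := ip x w + ip y u - ip y w.
Definition good (M : X -> set X) x u c := forall y w, M y w -> phi y w x u <= c.
Definition Nq x u := (ip x x + ip u u) / 2.

Lemma good_lb M : maximally_monotone ip M -> forall x u c, good M x u c -> ip x u <= c.
Proof.
move=> hM x u c g; rewrite leNgt; apply/negP => lt.
have Mxu : M x u.
  apply: (@max_mono_in M hM x u) => p a Mpa.
  have := g p a Mpa; rewrite /phi !(ipBl, ipBr) => h.
  lra.
by have := g x u Mxu; rewrite /phi; lra.
Qed.

Lemma graph_ne M : maximally_monotone ip M -> exists y w, M y w.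
Proof.
move=> hM; have [//|nog] := pselect (exists y w, M y w).
exists 0, 0; apply: (max_mono_in hM) => p a Mpa.
by exfalso; apply: nog; exists p, a.
Qed.

Lemma good_graph M : monotone_op ip M -> forall y w, M y w -> good M y w (ip y w).
Proof.
move=> mono y w Myw y' w' M'; have := mono _ _ _ _ Myw M'.
rewrite /phi !(ipBl, ipBr) (ipC y' w); lra.
Qed.

Lemma good_conv M x1 u1 c1 x2 u2 c2 t : 0 <= t -> t <= 1 ->
  good M x1 u1 c1 -> good M x2 u2 c2 ->
  good M (x1 + t *: (x2 - x1)) (u1 + t *: (u2 - u1)) (c1 + t * (c2 - c1)).
Proof.
move=> t0 t1 g1 g2 y w Myw.
have h1 := g1 y w Myw; have h2 := g2 y w Myw.
move: h1 h2; rewrite /phi !(ipDl, ipDr, ipBl, ipBr, ipZl, ipZr, ipNl, ipNr) => h1 h2.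
have a1 : 0 <= (1 - t) * (c1 - (ip x1 w + ip y u1 - ip y w)) by rewrite mulr_ge0 //; lra.
have a2 : 0 <= t * (c2 - (ip x2 w + ip y u2 - ip y w)) by rewrite mulr_ge0 //; lra.
nra.
Qed.

Lemma psi_close y w x0 u0 x u eta :
  `|x0 - x| <= eta -> `|u0 - u| <= eta ->
  phi y w x0 u0 + Nq x0 u0 <= phi y w x u + Nq x u +
     eta * (`|w| + `|y| + `|x0| + `|u0|).
Proof.
move=> hx hu.
have [dx ex] : exists dx, x = x0 - dx by exists (x0 - x); rewrite opprB addrC subrK.
have [du eu] : exists du, u = u0 - du by exists (u0 - u); rewrite opprB addrC subrK.
subst x u; rewrite opprB addrC subrK in hx; rewrite opprB addrC subrK in hu.
rewrite /phi /Nq !(ipDl, ipDr, ipBl, ipBr, ipZl, ipZr, ipNl, ipNr).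
have b1 : ip dx w <= eta * `|w|.
  apply: le_trans (ler_norm _) _; apply: le_trans (CS _ _) _.
  by rewrite ler_wpM2r.
have b2 : ip y du <= eta * `|y|.
  apply: le_trans (ler_norm _) _; apply: le_trans (CS _ _) _.
  by rewrite mulrC ler_wpM2r.
have b3 : ip x0 dx <= eta * `|x0|.
  apply: le_trans (ler_norm _) _; apply: le_trans (CS _ _) _.
  by rewrite mulrC ler_wpM2r.
have b4 : ip u0 du <= eta * `|u0|.
  apply: le_trans (ler_norm _) _; apply: le_trans (CS _ _) _.
  by rewrite mulrC ler_wpM2r.
have p1 := ipxx_ge0 dx; have p2 := ipxx_ge0 du.
rewrite ?(ipC dx x0) ?(ipC du u0).
lra.
Qed.

Lemma small_inv {e : R} : 0 < e -> exists n : nat, 8 / n.+1%:R < e.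
Proof.
move=> e0; exists (Num.truncn (8 / e)).
have h := truncnS_gt (8 / e).
rewrite ltr_pdivrMr ?ltr0Sn // mulrC; by rewrite ltr_pdivrMr in h.
Qed.

Lemma cauchy_sq (a : nat -> X) :
  (forall n k, (n <= k)%N -> `|a n - a k| ^+ 2 <= 8 / n.+1%:R) -> cvg (a @ \oo).
Proof.
move=> H.
suff : cauchy (a @ \oo) by exact: cauchy_cvg.
suff : cauchy_ex (a @ \oo) by exact: cauchy_exP.
move=> e e0; rewrite /fmapE -ball_normE /ball_.
have [n hn] := small_inv (exprn_gt0 2 e0 : 0 < e ^+ 2).
exists (a n), n => // m nm /=.
have h := H n m nm.
rewrite -(ltr_pXn2r (n:=2)) // ?nnegrE ?normr_ge0 ?ltW //.
by apply: le_lt_trans hn.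
Qed.

Lemma near_oo {P : nat -> Prop} : (\forall n \near \oo, P n) -> exists N, forall n, (N <= n)%N -> P n.
Proof. by move=> [N _ hN]; exists N. Qed.

Arguments good_lb {M} hM {x u c}.
Arguments graph_ne {M}.
Arguments good_graph {M}.
Arguments good_conv {M x1 u1 c1 x2 u2 c2 t}.

Lemma lin_lim (K1 K2 : R) : 0 <= K2 ->
  (forall t, 0 < t -> t <= 1 -> 0 <= K1 + t * K2) -> 0 <= K1.
Proof.
move=> K20 H; rewrite leNgt; apply/negP => K1n.
have d0 : 0 < K2 - K1 by lra.
pose t := - K1 / (K2 - K1).
have et : t * (K2 - K1) = - K1 by rewrite /t mulfVK // gt_eqF.
have t0 : 0 < t by rewrite /t divr_gt0 //; lra.
have t1 : t <= 1.
  rewrite /t ler_pdivrMr // mul1r; lra.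
have := H t t0 t1.
have e2 : (K1 + t * K2) * (K2 - K1) = K1 * (K2 - K1) + (t * (K2 - K1)) * K2 by ring.
rewrite et in e2.
move=> h; have := mulr_ge0 h (ltW d0); rewrite e2.
nra.
Qed.

Lemma arith_bnd (a b : R) : b <= a -> 4 * (a + b) <= 8 * a.
Proof. lra. Qed.

Lemma arith_drop (a b c : R) : 0 <= b -> a + b <= c -> a <= c.
Proof. lra. Qed.
Lemma arith_drop2 (a b c : R) : 0 <= a -> a + b <= c -> b <= c.
Proof. lra. Qed.

Lemma arith_key {q a r c N P Z m e : R} : q < e / 2 -> a <= e / 2 -> r <= q ->
  c + N < m + r -> P <= c -> Z <= P + N + a -> Z <= m + e.
Proof. lra. Qed.

Lemma arith_Mn {xx xu uu pa xp ua c : R} : xu <= c -> 0 <= xx + xu + (xu + uu) ->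
  0 <= pa - c + (xp - xx) + (ua - uu) -> 0 <= - (- xu - ua) + (- - xp - - pa).
Proof. lra. Qed.

Lemma arith_mid (m a b c a' b' c' cn ck en ek : R) : 
ck + (c + c') / 2 < m + ek ->
cn + (a + a') / 2 < m + en ->
    m <=
    cn + 2^-1 * (ck - cn) +
    (a + 2^-1 * (b - a) +
     (2^-1 * (b - a) + 2^-1 * (2^-1 * (c - b) - 2^-1 * (b - a))) +
     (a' + 2^-1 * (b' - a') +
      (2^-1 * (b' - a') + 2^-1 * (2^-1 * (c' - b') - 2^-1 * (b' - a'))))) /
    2 ->
  a - b + (- b - - c) + (a' - b' + (- b' - - c')) <= 4 * (en + ek).
Proof. lra. Qed.

Lemma minty0 M : maximally_monotone ip M -> exists y w, M y w /\ y + w = 0.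
Proof.
move=> hM; have mono := hM.1.
pose S : set R := [set r | exists x u (c : R), good M x u c /\ r = c + Nq x u].
have Slb : lbound S 0.
  move=> r [x [u [c [g ->]]]].
  have := good_lb hM g; have := ipxx_ge0 (x + u).
  rewrite /Nq !(ipDl, ipDr) (ipC u x); lra.
have Sne : S !=set0.
  have [y [w Myw]] := graph_ne hM.
  exists (ip y w + Nq y w), y, w, (ip y w); split => //.
  exact: good_graph.
have hinf : has_inf S by split => //; exists 0.
set m := inf S.
have mle : forall x u c, good M x u c -> m <= c + Nq x u.
  move=> x u c g; apply: (ge_inf hinf.2).
  by exists x, u, c.
have hseq : forall n : nat, exists t : X * X * R,
    good M t.1.1 t.1.2 t.2 /\ t.2 + Nq t.1.1 t.1.2 < m + n.+1%:R^-1.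
  move=> n; have hp : 0 < n.+1%:R^-1 :> R by rewrite invr_gt0 ltr0Sn.
  have [r [x [u [c [g ->]]]] hr] := inf_adherent hp hinf.
  by exists (x, u, c).
have [f hf] := choice hseq.
clearbody m.
pose xs n := (f n).1.1; pose us n := (f n).1.2; pose cs n := (f n).2.
have gs n : good M (xs n) (us n) (cs n) := (hf n).1.
have ls n : cs n + Nq (xs n) (us n) < m + n.+1%:R^-1 := (hf n).2.
have est : forall n k, ip (xs n - xs k) (xs n - xs k) + ip (us n - us k) (us n - us k)
    <= 4 * (n.+1%:R^-1 + k.+1%:R^-1).
  move=> n k.
  have g := good_conv (t:=2^-1) ltac:(lra) ltac:(lra) (gs n) (gs k).
  have := mle _ _ _ g; have := ls n; have := ls k.
  rewrite /Nq !(ipDl, ipDr, ipBl, ipBr, ipZl, ipZr, ipNl, ipNr).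
  rewrite (ipC (xs k) (xs n)) (ipC (us k) (us n)).
  move: (ip (xs n) (xs n)) (ip (xs n) (xs k)) (ip (xs k) (xs k)) => a b c.
  move: (ip (us n) (us n)) (ip (us n) (us k)) (ip (us k) (us k)) => a' b' c'.
  move: (cs n) (cs k) (n.+1%:R^-1) (k.+1%:R^-1) => cn ck en ek.
  exact: arith_mid.
have bnd : forall n k, (n <= k)%N -> ip (xs n - xs k) (xs n - xs k) + ip (us n - us k) (us n - us k)
    <= 8 / n.+1%:R.
  move=> n k nk; apply: le_trans (est n k) _.
  apply: arith_bnd.
  by rewrite lef_pV2 ?posrE ?ltr0Sn // ler_nat ltnS.
have cx : cvg (xs @ \oo).
  apply: cauchy_sq => n k nk; rewrite -ipxx.
  exact: arith_drop (ipxx_ge0 _) (bnd n k nk).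
have cu : cvg (us @ \oo).
  apply: cauchy_sq => n k nk; rewrite -ipxx.
  exact: arith_drop2 (ipxx_ge0 _) (bnd n k nk).
set x0 := lim (xs @ \oo); set u0 := lim (us @ \oo).
have key : forall y w, M y w -> phi y w x0 u0 + Nq x0 u0 <= m.
  move=> y w Myw; apply/ler_addgt0Pr => e e0.
  set K := `|w| + `|y| + `|x0| + `|u0| + 1.
  have K0 : 0 < K by rewrite /K; have := normr_ge0 w; have := normr_ge0 y;
    have := normr_ge0 x0; have := normr_ge0 u0; lra.
  pose eta := e / (2 * K).
  have eta0 : 0 < eta by rewrite /eta divr_gt0 // mulr_gt0.
  have etaK : eta * K = e / 2.
    by rewrite /eta; field; rewrite gt_eqF.
  have [N1 h1] := near_oo (cvgr_dist_lt _ _ cx _ eta0).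
  have [N2 h2] := near_oo (cvgr_dist_lt _ _ cu _ eta0).
  have [N3 h3] := small_inv (divr_gt0 e0 (ltr0Sn R 1) : 0 < e / 2).
  pose n := maxn N1 (maxn N2 N3).
  have hn1 : (N1 <= n)%N by rewrite leq_maxl.
  have hn2 : (N2 <= n)%N by rewrite /n (leq_trans (leq_maxl N2 N3)) // leq_maxr.
  have hn3 : (N3 <= n)%N by rewrite /n (leq_trans (leq_maxr N2 N3)) // leq_maxr.
  have := psi_close y w x0 u0 (xs n) (us n) eta (ltW (h1 n hn1)) (ltW (h2 n hn2)).
  have := gs n y w Myw; have := ls n.
  have : n.+1%:R^-1 <= 8 / N3.+1%:R :> R.
    apply: (@le_trans _ _ (N3.+1%:R^-1)).
      by rewrite lef_pV2 ?posrE ?ltr0Sn // ler_nat ltnS.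
    by rewrite ler_pMl ?invr_gt0 ?ltr0Sn //; lra.
  have : eta * (`|w| + `|y| + `|x0| + `|u0|) <= eta * K.
    by rewrite ler_pM2l // /K lerDl.
  rewrite etaK => ha hr hc hP hZ.
  exact: (arith_key h3 ha hr hc hP hZ).
pose c0 := m - Nq x0 u0.
have g0 : good M x0 u0 c0 by move=> y w Myw; have := key y w Myw; rewrite /c0; lra.
have c0lb := good_lb hM g0.
have VI : forall y w, M y w ->
    0 <= ip y w - c0 + ip x0 (y - x0) + ip u0 (w - u0).
  move=> y w Myw.
  apply: (@lin_lim _ ((ip (y - x0) (y - x0) + ip (w - u0) (w - u0)) / 2)).
    by have := ipxx_ge0 (y - x0); have := ipxx_ge0 (w - u0); lra.
  move=> t t0 t1.
  have g := good_conv (ltW t0) t1 g0 (good_graph mono _ _ Myw).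
  have := mle _ _ _ g.
  rewrite /c0 /Nq !(ipDl, ipDr, ipBl, ipBr, ipZl, ipZr, ipNl, ipNr).
  rewrite (ipC y x0) (ipC w u0) => h.
  rewrite -(pmulr_rge0 _ t0).
  lra.
have Mn : M (- u0) (- x0).
  apply: (max_mono_in hM) => p a Mpa.
  have := VI p a Mpa; have := ipxx_ge0 (x0 + u0).
  rewrite !(ipDl, ipDr, ipBl, ipBr, ipZl, ipZr, ipNl, ipNr).
  rewrite ?(ipC p x0) ?(ipC a u0) ?(ipC u0 x0) ?(ipC a p).
  move=> h1 h2; exact: (arith_Mn c0lb h1 h2).
have := VI _ _ Mn.
have e0 : x0 + u0 = 0.
  apply: ipxx_le0; move: (VI _ _ Mn).
  rewrite !(ipDl, ipDr, ipBl, ipBr, ipZl, ipZr, ipNl, ipNr).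
  rewrite (ipC u0 x0); lra.
exists (- u0), (- x0); split => //.
by rewrite -opprD addrC e0 oppr0.
Qed.

Arguments minty0 {M}.

Lemma minty M : maximally_monotone ip M ->
  forall z (lam : R), 0 < lam -> exists y w, M y w /\ y + lam *: w = z.
Proof.
move=> hM z lam lam0.
pose M' := fun y => [set u | exists w, M y w /\ u = lam *: w - z].
have monoM' : monotone_op ip M'.
  move=> x1 x2 u1 u2 [w1 [h1 ->]] [w2 [h2 ->]].
  have -> : lam *: w1 - z - (lam *: w2 - z) = lam *: (w1 - w2).
    by rewrite opprB addrA subrK scalerBr.
  rewrite ipZr; apply: mulr_ge0; [exact: ltW | exact: (hM.1 _ _ _ _ h1 h2)].
have hM' : maximally_monotone ip M'.
  split => // B monoB sub x u Bxu.
  exists (lam^-1 *: (u + z)); split; last first.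
    by rewrite scalerA mulfV ?gt_eqF // scale1r addrK.
  apply: (max_mono_in hM) => p a Mpa.
  have Bp : B p (lam *: a - z) by apply: sub; exists a.
  have := monoB _ _ _ _ Bxu Bp.
  have -> : u - (lam *: a - z) = lam *: (lam^-1 *: (u + z) - a).
    by rewrite scalerBr scalerA mulfV ?gt_eqF // scale1r opprB addrA.
  by rewrite ipZr pmulr_rge0.
have [y [u [[w [Myw ->]] e0]]] := minty0 hM'.
exists y, w; split => //.
by move/eqP: e0; rewrite addrA subr_eq0 => /eqP.
Qed.

Arguments minty {M}.

Definition inv_op (M : X -> set X) : X -> set X := fun y => [set w | M w y].

Lemma inv_op_max M : maximally_monotone ip M -> maximally_monotone ip (inv_op M).
Proof.
move=> [mono mx]; split.
  by move=> x y u w h1 h2; rewrite ipC; apply: mono.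
move=> B monoB sub x u Bxu.
pose B' := inv_op B.
have monoB' : monotone_op ip B'.
  by move=> x1 x2 u1 u2 h1 h2; rewrite ipC; apply: monoB.
exact: (mx B' monoB' (fun p a h => sub a p h)).
Qed.

Definition approx_conv (P : set X) := forall p1 p2 (t e : R), P p1 -> P p2 ->
  0 <= t -> t <= 1 -> 0 < e -> exists p, P p /\ `|p1 + t *: (p2 - p1) - p| < e.

Lemma arith_dom {d lam L K e : R} : 0 <= d -> 0 < e -> lam * L <= e / 2 ->
  lam * L * K <= e ^+ 2 / 4 -> d ^+ 2 <= lam * ((d + K) * L) -> d < e.
Proof. move=> *; nra. Qed.

Lemma arith_comb {t A B A' B' : R} : 0 <= t -> t <= 1 -> A <= A' -> B <= B' ->
  0 <= A' -> 0 <= B' -> (1 - t) * A + t * B <= A' + B'.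
Proof. move=> *; nra. Qed.

Lemma dom_conv M : maximally_monotone ip M -> approx_conv (dom_op M).
Proof.
move=> hM p q t e [a Mpa] [b Mqb] t0 t1 e0.
set z := p + t *: (q - p).
set L := `|a| + `|b|; set K := `|z - p| + `|z - q|.
have L0 : 0 <= L by rewrite /L addr_ge0.
have K0 : 0 <= K by rewrite /K addr_ge0.
set c := Num.min (e / 2) (e ^+ 2 / 4).
have e2 : 0 < e ^+ 2 by rewrite exprn_gt0.
have c0 : 0 < c by rewrite /c lt_min; apply/andP; split; lra.
pose lam := c / ((L + 1) * (K + 1)).
have P0 : 0 < (L + 1) * (K + 1) by rewrite mulr_gt0 //; lra.
have lam0 : 0 < lam by rewrite /lam divr_gt0.
have elam : lam * ((L + 1) * (K + 1)) = c by rewrite /lam mulfVK ?gt_eqF.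
have lamL : lam * L <= e / 2.
  apply: (@le_trans _ _ c); last by rewrite /c ge_min lexx.
  rewrite -elam ler_pM2l // ; nra.
have lamLK : lam * L * K <= e ^+ 2 / 4.
  apply: (@le_trans _ _ c); last by rewrite /c ge_min lexx orbT.
  rewrite -elam -mulrA ler_pM2l //; nra.
have [y [w [Myw eyw]]] := minty hM z lam lam0.
exists y; split; first by exists w.
have ez : z - y = lam *: w by rewrite -eyw addrC addKr.
have m1 : 0 <= ip (y - p) (z - y - lam *: a).
  by rewrite ez -scalerBr ipZr pmulr_rge0 //; apply: (hM.1 _ _ _ _ Myw Mpa).
have m2 : 0 <= ip (y - q) (z - y - lam *: b).
  by rewrite ez -scalerBr ipZr pmulr_rge0 //; apply: (hM.1 _ _ _ _ Myw Mqb).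
have t1' : 0 <= 1 - t by lra.
have m1' := mulr_ge0 t1' m1.
have m2' := mulr_ge0 t0 m2.
have S1 : ip (y - z) (y - z) <=
    lam * ((1 - t) * (- ip (y - p) a) + t * (- ip (y - q) b)).
  move: m1' m2'; rewrite /z !(ipDl, ipDr, ipBl, ipBr, ipZl, ipZr, ipNl, ipNr).
  rewrite !(ipC q p) !(ipC y p) !(ipC y q) => h1 h2.
  lra.
have dz : `|y - z| = `|z - y| by rewrite -normrN opprB.
rewrite ipxx dz in S1.
have hp : `|y - p| <= `|z - y| + K.
  have -> : y - p = (y - z) + (z - p) by rewrite addrA subrK.
  apply: (le_trans (ler_normD _ _)); rewrite dz lerD2l /K lerDl //.
have hq : `|y - q| <= `|z - y| + K.
  have -> : y - q = (y - z) + (z - q) by rewrite addrA subrK.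
  apply: (le_trans (ler_normD _ _)); rewrite dz lerD2l /K lerDr //.
have ca : - ip (y - p) a <= (`|z - y| + K) * `|a|.
  apply: le_trans (ler_norm _) _; rewrite normrN.
  by apply: le_trans (CS _ _) _; rewrite ler_wpM2r.
have cb : - ip (y - q) b <= (`|z - y| + K) * `|b|.
  apply: le_trans (ler_norm _) _; rewrite normrN.
  by apply: le_trans (CS _ _) _; rewrite ler_wpM2r.
have hcomb : (1 - t) * (- ip (y - p) a) + t * (- ip (y - q) b) <= (`|z - y| + K) * L.
  rewrite /L mulrDr; apply: arith_comb => //.
    by rewrite mulr_ge0 // addr_ge0.
  by rewrite mulr_ge0 // addr_ge0.
apply: (arith_dom (normr_ge0 _) e0 lamL lamLK).
apply: (le_trans S1); rewrite ler_pM2l //.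
Qed.

Arguments dom_conv {M}.
Arguments inv_op_max {M}.

Lemma ran_conv M : maximally_monotone ip M -> approx_conv (ran_op M).
Proof. by move=> hM; exact: (dom_conv (inv_op_max hM)). Qed.

Lemma vsub3 (a b c : X) : a - b - (a - c) = c - b.
Proof. by rewrite opprB addrC addrA subrK. Qed.

Lemma rec_ran M u beta : maximally_monotone ip M ->
  (forall q b, M q b -> ip q u <= beta) ->
  forall q0 b0 (e : R), M q0 b0 -> 0 < e -> exists q b, M q b /\ `|b0 + u - b| < e.
Proof.
move=> hM hb q0 b0 e Mq0 e0.
set g := beta - ip q0 u.
have g0 : 0 <= g by rewrite /g subr_ge0; apply: hb Mq0.
have e2 : 0 < e ^+ 2 by rewrite exprn_gt0.
set lam := g / e ^+ 2 + 1.
have ge2 : 0 <= g / e ^+ 2 by rewrite divr_ge0 // ltW.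
have lam0 : 0 < lam by rewrite /lam; lra.
have glam : g < lam * e ^+ 2.
  have : g / e ^+ 2 < lam by rewrite /lam; lra.
  by rewrite ltr_pdivrMr.
set z := q0 + lam *: (b0 + u).
have [y [w [Myw eyw]]] := minty hM z lam lam0.
exists y, w; split => //.
set r := b0 + u - w.
have er : lam *: r = y - q0.
  rewrite /r scalerBr.
  have -> : lam *: w = z - y by rewrite -eyw addrAC subrr add0r.
  have -> : lam *: (b0 + u) = z - q0 by rewrite /z addrAC subrr add0r.
  exact: vsub3.
have ew : w - b0 = u - r.
  by rewrite /r opprB opprD addrCA [u + _]addrCA subrr addr0.
have m1 : 0 <= ip (y - q0) (w - b0) by apply: (hM.1 _ _ _ _ Myw Mq0).
rewrite ew -er ipZl pmulr_rge0 // ipBr in m1.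
have m2 : ip (y - q0) u <= g by rewrite ipBl /g lerD2r; apply: hb Myw.
rewrite -er ipZl in m2.
have h3 : lam * ip r r < lam * e ^+ 2.
  apply: le_lt_trans _ glam; apply: le_trans _ m2.
  by rewrite ler_pM2l // -subr_ge0.
rewrite ltr_pM2l // ipxx in h3.
by rewrite -(ltr_pXn2r (n:=2)) // ?nnegrE ?normr_ge0 ?ltW.
Qed.

Definition lerp (x y : X) (t : R) := x + t *: (y - x).

Lemma lerpE x y t : lerp x y t = (1 - t) *: x + t *: y.
Proof. by rewrite /lerp scalerBr scalerBl scale1r addrA addrAC. Qed.

Lemma lerpD x1 x2 y1 y2 t : lerp (x1 + x2) (y1 + y2) t = lerp x1 y1 t + lerp x2 y2 t.
Proof. by rewrite !lerpE !scalerDr addrACA. Qed.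

Lemma lerpZ k x y t : lerp (k *: x) (k *: y) t = k *: lerp x y t.
Proof. by rewrite !lerpE scalerDr !scalerA mulrC [t * k]mulrC. Qed.

Lemma lerpN x y t : lerp (- x) (- y) t = - lerp x y t.
Proof. by rewrite -[- x]scaleN1r -[- y]scaleN1r lerpZ scaleN1r. Qed.

Lemma lerpB x1 x2 y1 y2 t : lerp (x1 - x2) (y1 - y2) t = lerp x1 y1 t - lerp x2 y2 t.
Proof. by rewrite lerpD lerpN. Qed.

Lemma norm_lerp x y t : 0 <= t -> t <= 1 -> `|lerp x y t| <= (1 - t) * `|x| + t * `|y|.
Proof.
move=> t0 t1; rewrite lerpE; apply: le_trans (ler_normD _ _) _.
by rewrite !normrZ !ger0_norm // subr_ge0.
Qed.

Definition convex_set (S : set X) := forall s1 s2 (t : R), S s1 -> S s2 ->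
  0 <= t -> t <= 1 -> S (lerp s1 s2 t).

Lemma arith_cl {t n1 n2 m1 m2 k e : R} : 0 <= t -> t <= 1 -> n1 < e / 4 -> n2 < e / 4 ->
  m1 < e / 4 -> m2 < e / 4 -> 0 <= k -> k <= 1 -> 0 <= m2 ->
  (1 - t) * n1 + t * n2 + (m1 + k * m2) < e.
Proof.
move=> t0 t1 h1 h2 h3 h4 k0 k1 m20.
have a1 : (1 - t) * n1 <= (1 - t) * (e / 4) by rewrite ler_wpM2l ?subr_ge0 // ltW.
have a2 : t * n2 <= t * (e / 4) by rewrite ler_wpM2l // ltW.
have a3 : k * m2 <= e / 4.
  apply: (@le_trans _ _ (1 * m2)); first by rewrite ler_wpM2r.
  by rewrite mul1r ltW.
lra.
Qed.

Lemma idD (P a b A B : X) : P - (a + b) = P - (A + B) + ((A - a) + (B - b)).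
Proof. by rewrite [(A - a) + _]addrACA -[P - (A + B) + _]addrA addKr opprD. Qed.

Lemma closure_sum_conv (P Q : set X) (k : R) : `|k| <= 1 ->
  approx_conv P -> approx_conv Q ->
  convex_set (closure [set s | exists a b, P a /\ Q b /\ s = a + k *: b]).
Proof.
move=> k1 hP hQ s1 s2 t c1 c2 t0 t1; apply/closure_normP => e e0.
have e4 : 0 < e / 4 by lra.
have [_ [[a1 [b1 [Pa1 [Qb1 ->]]]] h1]] := (closure_normP _ _).1 c1 _ e4.
have [_ [[a2 [b2 [Pa2 [Qb2 ->]]]] h2]] := (closure_normP _ _).1 c2 _ e4.
have [a [Pa ha]] := hP a1 a2 t _ Pa1 Pa2 t0 t1 e4.
have [b [Qb hb]] := hQ b1 b2 t _ Qb1 Qb2 t0 t1 e4.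
exists (a + k *: b); split; first by exists a, b.
have -> : lerp s1 s2 t - (a + k *: b) =
   lerp (s1 - (a1 + k *: b1)) (s2 - (a2 + k *: b2)) t +
   ((lerp a1 a2 t - a) + k *: (lerp b1 b2 t - b)).
  by rewrite lerpB lerpD lerpZ scalerBr; apply: idD.
apply: le_lt_trans (ler_normD _ _) _.
apply: le_lt_trans (lerD (norm_lerp _ _ _ t0 t1) (lexx _)) _.
apply: le_lt_trans (lerD (lexx _) (ler_normD _ _)) _.
rewrite normrZ.
exact: (arith_cl t0 t1 h1 h2 ha hb (normr_ge0 k) k1 (normr_ge0 _)).
Qed.

Lemma proj_VI (S : set X) v : convex_set S -> is_proj S 0 v ->
  forall s, S s -> ip v v <= ip s v.
Proof.
move=> cS [Sv hv] s Ss.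
suff : 0 <= ip v (s - v) by rewrite ipBr (ipC v s) subr_ge0.
have : 0 <= 2 * ip v (s - v).
  apply: (@lin_lim _ (ip (s - v) (s - v))); first exact: ipxx_ge0.
  move=> t t0 t1.
  have := hv _ (cS _ _ _ Sv Ss (ltW t0) t1).
  rewrite !sub0r !normrN => h.
  have h2 := ler_pM (normr_ge0 v) (normr_ge0 v) h h.
  rewrite -!expr2 -!ipxx /lerp in h2.
  move: h2; rewrite !(ipDl, ipDr, ipBl, ipBr, ipZl, ipZr, ipNl, ipNr) (ipC s v) => h2.
  rewrite -(pmulr_rge0 _ t0); lra.
lra.
Qed.

Lemma idA (x u w : X) : x - (x - u - w) = u + w.
Proof. by rewrite -addrA -opprD opprB addrC subrK. Qed.
Lemma idB (a b u w : X) : a + b = w -> - (u + w) + a + (b + u) = 0.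
Proof. by move=> h; rewrite -addrA [a + _]addrA h [w + u]addrC addNr. Qed.
Lemma idC (a b u : X) : a + b = u -> - 0 + (a - u) + b = 0.
Proof. by move=> h; rewrite oppr0 add0r addrAC h subrr. Qed.

Lemma ip4 (x p a a' u w : X) : ip (x - u - p) (a - w - a') =
  ip (x - p) (a - a') - ip (x - p) w - ip u (a - a') + ip u w.
Proof. rewrite !(ipDl, ipDr, ipBl, ipBr, ipZl, ipZr, ipNl, ipNr); lra. Qed.

Lemma ip4' (c u q b w b' : X) : ip (c - u - q) (b + w - b') =
  ip (c - q) (b - b') + ip (c - q) w - ip u (b - b') - ip u w.
Proof. rewrite !(ipDl, ipDr, ipBl, ipBr, ipZl, ipZr, ipNl, ipNr); lra. Qed.

Lemma ipswap (p x z : X) : ip (p - x) z = - ip (x - p) z.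
Proof. by rewrite -ipNl opprB. Qed.

Lemma idE (v a b1 b2 : X) : v - (a + b2) = (b1 + v - b2) + (0 - (a + b1)).
Proof. by rewrite sub0r [b1 + v]addrC addrAC [a + b1]addrC addrKA opprD addrA addrAC. Qed.

Lemma main_thm (A B : X -> set X)
  (hA : maximally_monotone ip A) (hB : maximally_monotone ip B)
  (v vD vR : X)
  (hv : is_proj (closure (ran_op (id_minus (DR_op A B)))) 0 v)
  (hvD : is_proj (closure (dom_diff A B)) 0 vD)
  (hvR : is_proj (closure (ran_sum A B)) 0 vR)
  (hran1 : closure (ran_op (id_minus (DR_op A B))) =
           closure (dom_diff A B `&` ran_sum A B))
  (hran2 : closure (dom_diff A B `&` ran_sum A B) =
           closure (dom_diff A B) `&` closure (ran_sum A B)) :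
  let Z := [set x : X | exists a b, [/\ A x a, B (x - v) b & 0 = - v + a + b]] in
  let Zt := [set x : X | exists a b, [/\ A x a, B (x - vD) b & 0 = - vR + a + b]] in
  Zt `<=` Z /\ (vR = 0 -> Zt = Z).
Proof.
move=> Z Zt.
set D := dom_diff A B; set Rs := ran_sum A B.
have Dcl : convex_set (closure D).
  have -> : D = [set s | exists a b, dom_op A a /\ dom_op B b /\ s = a + (-1) *: b].
    rewrite /D /dom_diff; apply/seteqP; split => s.
      by move=> [a [b [ha hb ->]]]; exists a, b; rewrite scaleN1r.
    by move=> [a [b [ha [hb ->]]]]; exists a, b; rewrite scaleN1r.
  apply: closure_sum_conv; first by rewrite normrN normr1.
    exact: dom_conv hA.
  exact: dom_conv hB.
have Rcl : convex_set (closure Rs).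
  have -> : Rs = [set s | exists a b, ran_op A a /\ ran_op B b /\ s = a + 1 *: b].
    rewrite /Rs /ran_sum; apply/seteqP; split => s.
      by move=> [a [b [ha hb ->]]]; exists a, b; rewrite scale1r.
    by move=> [a [b [ha [hb ->]]]]; exists a, b; rewrite scale1r.
  apply: closure_sum_conv; first by rewrite normr1.
    exact: ran_conv hA.
  exact: ran_conv hB.
have VID : forall s, closure D s -> ip vD vD <= ip s vD := proj_VI _ _ Dcl hvD.
have VIR : forall s, closure Rs s -> ip vR vR <= ip s vR := proj_VI _ _ Rcl hvR.
have Dsub : forall p a q b, A p a -> B q b -> closure D (p - q).
  move=> p a q b Apa Bqb; apply: subset_closure.
  by exists p, q; split => //; [exists a | exists b].
have Rsub : forall p a q b, A p a -> B q b -> closure Rs (a + b).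
  move=> p a q b Apa Bqb; apply: subset_closure.
  by exists a, b; split => //; [exists p | exists q].
have vcl : closure D v /\ closure Rs v.
  by apply: closureI; rewrite -hran1; exact: hv.1.
have vmin : forall s, closure (D `&` Rs) s -> `|v| <= `|s|.
  move=> s hs; have := hv.2 s; rewrite hran1 => /(_ hs).
  by rewrite !sub0r !normrN.
have sqle : forall s t : X, `|s| <= `|t| -> ip s s <= ip t t.
  move=> s t h; rewrite !ipxx !expr2.
  by apply: ler_pM => //; apply: normr_ge0.
have partI : Zt `<=` Z.
  move=> x [a [b [Ax Bc e0]]].
  set c := x - vD in Bc.
  have hab : a + b = vR.
    by apply/eqP; rewrite -subr_eq0 addrC; apply/eqP; rewrite addrA e0.
  have ipab z : ip a z + ip b z = ip vR z by rewrite -ipDl hab.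
  have F1 : forall p a', A p a' -> 0 <= ip (p - x) vD.
    move=> p a' Apa; have := VID _ (Dsub _ _ _ _ Apa Bc).
    rewrite /c !(ipDl, ipDr, ipBl, ipBr, ipZl, ipZr, ipNl, ipNr); lra.
  have F2 : forall q b', B q b' -> 0 <= ip (c - q) vD.
    move=> q b' Bqb; have := VID _ (Dsub _ _ _ _ Ax Bqb).
    rewrite /c !(ipDl, ipDr, ipBl, ipBr, ipZl, ipZr, ipNl, ipNr); lra.
  have F3 : forall p a', A p a' -> 0 <= ip (a' - a) vR.
    move=> p a' Apa; have := VIR _ (Rsub _ _ _ _ Apa Bc).
    have := ipab vR; rewrite !(ipDl, ipDr, ipBl, ipBr, ipZl, ipZr, ipNl, ipNr); lra.
  have F4 : forall q b', B q b' -> 0 <= ip (b' - b) vR.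
    move=> q b' Bqb; have := VIR _ (Rsub _ _ _ _ Ax Bqb).
    have := ipab vR; rewrite !(ipDl, ipDr, ipBl, ipBr, ipZl, ipZr, ipNl, ipNr); lra.
  have kle : ip vR vD <= 0.
    case: (leP (ip vR vD) 0) => // kpos.
    have At : A (x - vR) (a - vD).
      apply: (max_mono_in hA) => p a' Apa; rewrite ip4.
      have m := hA.1 _ _ _ _ Ax Apa; have f1 := F1 _ _ Apa; have f3 := F3 _ _ Apa.
      rewrite ipswap in f1; rewrite ipswap (ipC (a - a')) in f3.
      move: m f1 f3 kpos; rewrite (ipC vR vD); lra.
    have := VID _ (Dsub _ _ _ _ At Bc).
    rewrite /c vsub3 !(ipDl, ipDr, ipBl, ipBr, ipZl, ipZr, ipNl, ipNr); lra.
  have Bt : B (c - vR) (b + vD).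
    apply: (max_mono_in hB) => q b' Bqb; rewrite ip4'.
    have m := hB.1 _ _ _ _ Bc Bqb; have f2 := F2 _ _ Bqb; have f4 := F4 _ _ Bqb.
    rewrite ipswap (ipC (b - b')) in f4.
    move: m f2 f4 kle; rewrite (ipC vR vD); lra.
  have k0 : ip vR vD = 0.
    apply/eqP; rewrite eq_le kle /=.
    have := VID _ (Dsub _ _ _ _ Ax Bt).
    rewrite /c idA !(ipDl, ipDr, ipBl, ipBr, ipZl, ipZr, ipNl, ipNr); lra.
  have wDR : closure (D `&` Rs) (vD + vR).
    apply: subset_closure; split.
      exists x, (c - vR); split; [by exists a | by exists (b + vD) | by rewrite /c idA].
    exists a, (b + vD); split; [by exists x | by exists (c - vR) |].
    by rewrite addrA hab addrC.
  have ev : v = vD + vR.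
    have h1 := sqle _ _ (vmin _ wDR).
    have h2 := VID _ vcl.1; have h3 := VIR _ vcl.2.
    apply/eqP; rewrite -subr_eq0; apply/eqP; apply: ipxx_le0.
    move: h1 h2 h3; rewrite !(ipDl, ipDr, ipBl, ipBr, ipZl, ipZr, ipNl, ipNr) (ipC vD v) (ipC vR v) (ipC vD vR) k0.
    lra.
  exists a, (b + vD); split => //.
    by rewrite ev opprD addrA.
  by rewrite ev (idB _ _ vD _ hab).
split => // vR0.
apply/seteqP; split => //.
move=> x [a [b [Ax Bxv e0]]].
have hab : a + b = v.
  by apply/eqP; rewrite -subr_eq0 addrC; apply/eqP; rewrite addrA e0.
have hbnd : forall q b', B q b' -> ip q vD <= ip x vD - ip vD vD.
  move=> q b' Bqb; have := VID _ (Dsub _ _ _ _ Ax Bqb).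
  rewrite !(ipDl, ipDr, ipBl, ipBr, ipZl, ipZr, ipNl, ipNr); lra.
have hrec := rec_ran _ _ _ hB hbnd.
have vDR : closure Rs vD.
  apply/closure_normP => e e0'.
  have e2 : 0 < e / 2 by lra.
  have := hvR.1; rewrite vR0 => /closure_normP /(_ _ e2) [r [[a1 [b1 [[p1 Ap1] [q1 Bq1] ->]]] hr]].
  have [q [b2 [Bq hb2]]] := hrec _ _ _ Bq1 e2.
  exists (a1 + b2); split; first by exists a1, b2; split => //; [exists p1 | exists q].
  rewrite (idE _ _ b1).
  apply: le_lt_trans (ler_normD _ _) _.
  move: hr hb2; set n1 := `|_ - _|; set n2 := `|_ - _|; lra.
have vDDR : closure (D `&` Rs) vD by rewrite hran2; split => //; exact: hvD.1.
have evD : v = vD.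
  have h1 := sqle _ _ (vmin _ vDDR).
  have h2 := VID _ vcl.1.
  apply/eqP; rewrite -subr_eq0; apply/eqP; apply: ipxx_le0.
  move: h1 h2; rewrite !(ipDl, ipDr, ipBl, ipBr, ipZl, ipZr, ipNl, ipNr) (ipC vD v).
  lra.
rewrite evD in Bxv hab.
have At : A x (a - vD).
  apply: (max_mono_in hA) => p a' Apa.
  have m := hA.1 _ _ _ _ Ax Apa.
  have := VID _ (Dsub _ _ _ _ Apa Bxv).
  move: m; rewrite !(ipDl, ipDr, ipBl, ipBr, ipZl, ipZr, ipNl, ipNr).
  lra.
exists (a - vD), b; split => //.
by rewrite vR0 (idC _ _ _ hab).
Qed.

End Hilb.

Theorem theorem4p3 (R : realType) (X : completeNormedModType R)
  (ip : X -> X -> R) (hip : is_inner_product ip)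
  (A B : X -> set X)
  (hA : maximally_monotone ip A) (hB : maximally_monotone ip B)
  (v vD vR : X)
  (hv : is_proj (closure (ran_op (id_minus (DR_op A B)))) 0 v)
  (hvD : is_proj (closure (dom_diff A B)) 0 vD)
  (hvR : is_proj (closure (ran_sum A B)) 0 vR)
  (hran1 : closure (ran_op (id_minus (DR_op A B))) =
           closure (dom_diff A B `&`
                    ran_sum A B))
  (hran2 : closure (dom_diff A B `&`
                    ran_sum A B) =
           closure (dom_diff A B) `&`
           closure (ran_sum A B)) :
  let Z := [set x : X | exists a b, [/\ A x a, B (x - v) b & 0 = - v + a + b]] in
  let Zt := [set x : X | exists a b, [/\ A x a, B (x - vD) b & 0 = - vR + a + b]] in
  Zt `<=` Z /\ (vR = 0 -> Zt = Z).
Proof.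
exact: (@main_thm R X ip hip A B hA hB v vD vR hv hvD hvR hran1 hran2).
Qed.
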